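(* Let $C$ be a circle in the plane and let $E$ be an ellipse lying in the interior of the disk bounded by $C$, such that $E$ is a Poncelet $3$-ellipse for $C$, and such that the center of $E$ coincides with the center of $C$. For each triangle that is inscribed in $C$ (all three vertices on $C$) and circumscribes $E$ (each side tangent to $E$), form three circles: for each side of the triangle, the circle centered at the midpoint of that side and passing through the vertex of the triangle opposite to that side. Then the sum of the areas of these three circles is the same for every such triangle; that is, it depends only on the pair $(E, C)$.
   Context: An ellipse $E$ in the interior of a circle $C$ is called a Poncelet $3$-ellipse (for $C$) if there exists a triangle inscribed in $C$ whose three sides are tangent to $E$; by Poncelet's closure theorem, every point of $C$ is then a vertex of such a triangle (these triangles are called Poncelet triangles). *)

(* Defs.v *)
From Stdlib Require Import Reals Lra.
Open Scope R_scope.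

Definition point := (R * R)%type.

Definition dist2 (p q : point) : R :=
  (fst p - fst q) ^ 2 + (snd p - snd q) ^ 2.

Definition dist (p q : point) : R := sqrt (dist2 p q).

Definition on_circle (o : point) (r : R) (p : point) : Prop := dist o p = r.

(* Ellipse with center c, semi-axes a, b > 0, first axis along the unit
   vector (u1, u2), second axis along (-u2, u1). *)
Record ellipse := mkEllipse {
  e_center : point; e_a : R; e_b : R; e_u1 : R; e_u2 : R }.

Definition wf_ellipse (E : ellipse) : Prop :=
  0 < e_a E /\ 0 < e_b E /\ e_u1 E ^ 2 + e_u2 E ^ 2 = 1.

Definition on_ellipse (E : ellipse) (p : point) : Prop :=
  let x := fst p - fst (e_center E) in
  let y := snd p - snd (e_center E) in
  let s := x * e_u1 E + y * e_u2 E in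
  let t := - x * e_u2 E + y * e_u1 E in
  s ^ 2 / e_a E ^ 2 + t ^ 2 / e_b E ^ 2 = 1.

Definition on_line (a b p : point) : Prop :=
  (fst b - fst a) * (snd p - snd a) - (snd b - snd a) * (fst p - fst a) = 0.

Definition on_segment (a b p : point) : Prop :=
  exists t, 0 <= t <= 1 /\
    p = (fst a + t * (fst b - fst a), snd a + t * (snd b - snd a)).

Definition side_tangent (E : ellipse) (a b : point) : Prop :=
  exists p, on_ellipse E p /\ on_segment a b p /\
    forall q, on_ellipse E q -> on_line a b q -> q = p.

Definition poncelet_triangle (o : point) (r : R) (E : ellipse)
    (A B C : point) : Prop :=
  A <> B /\ B <> C /\ C <> A /\
  on_circle o r A /\ on_circle o r B /\ on_circle o r C /\
  side_tangent E A B /\ side_tangent E B C /\ side_tangent E C A.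

Definition poncelet3 (o : point) (r : R) (E : ellipse) : Prop :=
  exists A B C, poncelet_triangle o r E A B C.

Definition ellipse_inside (o : point) (r : R) (E : ellipse) : Prop :=
  forall p, on_ellipse E p -> dist o p < r.

Definition midpoint (p q : point) : point :=
  ((fst p + fst q) / 2, (snd p + snd q) / 2).

Definition circle_area (r : R) : R := PI * r ^ 2.

Definition median_circles_area (A B C : point) : R :=
  circle_area (dist (midpoint B C) A) +
  circle_area (dist (midpoint C A) B) +
  circle_area (dist (midpoint A B) C).

(* Main.v *)
Require Import Defs.
From Stdlib Require Import Reals Lra Psatz.
Open Scope R_scope.


Lemma div_nonneg (x y : R) : 0 <= x -> 0 < y -> 0 <= x / y.
Proof. intros. unfold Rdiv. apply Rmult_le_pos; [lra| left; apply Rinv_0_lt_compat; lra]. Qed.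
Lemma div_pos (x y : R) : 0 < x -> 0 < y -> 0 < x / y.
Proof. intros. unfold Rdiv. apply Rmult_lt_0_compat; [lra| apply Rinv_0_lt_compat; lra]. Qed.

Lemma tangency_core (a b X1 Y1 X2 Y2 T1 T2 : R):
 0<a -> 0<b -> 0 < (X2-X1)^2+(Y2-Y1)^2 ->
 T1^2/a^2 + T2^2/b^2 = 1 ->
 (X2-X1)*(T2-Y1) - (Y2-Y1)*(T1-X1) = 0 ->
 (forall l, (T1 + l*(X2-X1))^2/a^2 + (T2 + l*(Y2-Y1))^2/b^2 = 1 -> l = 0) ->
 (X2*Y1 - Y2*X1)^2 = a^2*(Y2-Y1)^2 + b^2*(X2-X1)^2.
Proof.
  intros ha hb hd hT hL hU.
  set (d1 := X2 - X1) in *. set (d2 := Y2 - Y1) in *.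
  set (W := d1^2/a^2 + d2^2/b^2).
  set (c := T1*d1/a^2 + T2*d2/b^2).
  assert (HW : 0 < W).
  { unfold W. 
    assert (0 < d1^2 \/ 0 < d2^2) as [H|H] by nra.
    - assert (0 < d1^2/a^2) by (apply div_pos; nra).
      assert (0 <= d2^2/b^2) by (apply div_nonneg; nra). lra.
    - assert (0 <= d1^2/a^2) by (apply div_nonneg; nra).
      assert (0 < d2^2/b^2) by (apply div_pos; nra). lra. }
  assert (Hexp : forall l, (T1 + l*d1)^2/a^2 + (T2 + l*d2)^2/b^2
                  = (T1^2/a^2 + T2^2/b^2) + l*(2*c + l*W)).
  { intros l. unfold c, W. field. split; lra. }
  assert (Hc : c = 0).
  { assert (H0 := hU (-2*c/W)). rewrite Hexp, hT in H0.
    assert (-2*c/W = 0).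
    { apply H0. replace (2 * c + -2 * c / W * W) with 0 by (field; lra). ring. }
    assert (c = (-2*c/W) * (-W/2)) by (field; lra). rewrite H1, H. ring. }
  assert (Hh : X2*Y1 - Y2*X1 = d1*T2 - d2*T1) by (unfold d1, d2 in *; lra).
  rewrite Hh.
  assert (Hid : (a^2*d2^2+b^2*d1^2)*(T1^2/a^2+T2^2/b^2) = (d2*T1 - d1*T2)^2 + a^2*b^2*c^2).
  { unfold c. field. split; lra. }
  rewrite hT, Hc in Hid. nra.
Qed.
Lemma bilinear_core (a b r X1 Y1 X2 Y2 : R):
  X1^2+Y1^2 = r^2 -> X2^2+Y2^2 = r^2 -> 0 < (X2-X1)^2+(Y2-Y1)^2 -> 0 < r ->
  (X2*Y1 - Y2*X1)^2 = a^2*(Y2-Y1)^2 + b^2*(X2-X1)^2 ->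
  (r^2-a^2+b^2)*X1*X2 + (r^2+a^2-b^2)*Y1*Y2 = r^2*(a^2+b^2-r^2).
Proof.
  intros h1 h2 hd hr ht.
  set (g := X1*X2+Y1*Y2).
  assert (Hg : 2*(r^2 - g) = (X2-X1)^2+(Y2-Y1)^2) by (unfold g; nra).
  assert (Hh : (X2*Y1 - Y2*X1)^2 = (r^2-g)*(r^2+g)).
  { assert ((X1^2+Y1^2)*(X2^2+Y2^2) = g^2 + (X2*Y1 - Y2*X1)^2) by (unfold g; ring).
    rewrite h1, h2 in H. nra. }
  assert (HX1 : X1^2 = r^2 - Y1^2) by lra.
  assert (HX2 : X2^2 = r^2 - Y2^2) by lra.
  assert (Hd2 : r^2*(Y2-Y1)^2 = (r^2+X1*X2-Y1*Y2)*(r^2-g)).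
  { unfold g. 
    assert (E: (r^2+X1*X2-Y1*Y2)*(r^2-(X1*X2+Y1*Y2)) - r^2*(Y2-Y1)^2
      = r^4 - r^2 * (Y1^2+Y2^2) - X1^2*X2^2 + Y1^2*Y2^2) by ring.
    rewrite HX1, HX2 in E. lra. }
  assert (HY1 : Y1^2 = r^2 - X1^2) by lra.
  assert (HY2 : Y2^2 = r^2 - X2^2) by lra.
  assert (Hd1 : r^2*(X2-X1)^2 = (r^2-X1*X2+Y1*Y2)*(r^2-g)).
  { unfold g. 
    assert (E: (r^2-X1*X2+Y1*Y2)*(r^2-(X1*X2+Y1*Y2)) - r^2*(X2-X1)^2
      = r^4 - r^2 * (X1^2+X2^2) - Y1^2*Y2^2 + X1^2*X2^2) by ring.
    rewrite HY1, HY2 in E. lra. }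
  assert (Hne : r^2 - g <> 0) by lra.
  assert (K : (r^2-g) * (r^2*(r^2+g) - a^2*(r^2+X1*X2-Y1*Y2) - b^2*(r^2-X1*X2+Y1*Y2)) = 0).
  { assert (r^2 * ((X2*Y1 - Y2*X1)^2) = r^2*(a^2*(Y2-Y1)^2 + b^2*(X2-X1)^2)) by (rewrite ht; ring).
    rewrite Hh in H.
    replace (r ^ 2 * (a ^ 2 * (Y2 - Y1) ^ 2 + b ^ 2 * (X2 - X1) ^ 2)) with
      (a^2 * (r^2*(Y2-Y1)^2) + b^2*(r^2*(X2-X1)^2)) in H by ring.
    rewrite Hd2, Hd1 in H. lra. }
  apply Rmult_integral in K. destruct K as [K|K]; [contradiction|].
  unfold g in K. lra.
Qed.
Lemma vertex_core (p q s r XA YA XB YB XC YC : R):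
  XB^2+YB^2 = r^2 -> XC^2+YC^2 = r^2 ->
  p*XA*XB + q*YA*YB = s -> p*XA*XC + q*YA*YC = s ->
  0 < (XB-XC)^2+(YB-YC)^2 -> 0 < (p*XA)^2+(q*YA)^2 ->
  (XA*XB+YA*YB + XB*XC+YB*YC + XC*XA+YC*YA + r^2) * ((p*XA)^2+(q*YA)^2)
   = 2*s*(p*XA^2+q*YA^2 + s).
Proof.
  intros hB hC e1 e2 hd hN.
  set (n1 := p*XA) in *. set (n2 := q*YA) in *.
  set (N := n1^2+n2^2) in *.
  set (u1 := XB+XC). set (u2 := YB+YC). set (v1 := XB-XC). set (v2 := YB-YC).
  assert (nv : n1*v1 + n2*v2 = 0).
  { replace (n1*v1 + n2*v2) with ((n1*XB+n2*YB) - (n1*XC+n2*YC)) by (unfold v1,v2; ring).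
    rewrite e1, e2. ring. }
  assert (uv : u1*v1 + u2*v2 = 0).
  { unfold u1,u2,v1,v2. replace ((XB + XC) * (XB - XC) + (YB + YC) * (YB - YC)) with
     ((XB^2+YB^2) - (XC^2+YC^2)) by ring. rewrite hB, hC. ring. }
  assert (un : u1*n1 + u2*n2 = 2*s).
  { replace (u1*n1 + u2*n2) with ((n1*XB+n2*YB) + (n1*XC+n2*YC)) by (unfold u1,u2; ring).
    rewrite e1, e2. ring. }
  set (det := n1*u2 - n2*u1).
  assert (dv1 : det*v1 = 0).
  { unfold det. replace ((n1*u2 - n2*u1)*v1) with (u2*(n1*v1+n2*v2) - n2*(u1*v1+u2*v2)) by ring.
    rewrite nv, uv. ring. }
  assert (dv2 : det*v2 = 0).
  { unfold det. replace ((n1*u2 - n2*u1)*v2) with (n1*(u1*v1+u2*v2) - u1*(n1*v1+n2*v2)) by ring.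
    rewrite nv, uv. ring. }
  assert (Hdet : det = 0).
  { destruct (Req_dec det 0) as [|Hn]; auto.
    apply Rmult_integral in dv1. apply Rmult_integral in dv2.
    destruct dv1; [contradiction|]. destruct dv2; [contradiction|].
    unfold v1, v2 in *. exfalso. nra. }
  assert (U1 : u1*N = 2*s*n1).
  { unfold N. replace (u1*(n1^2+n2^2)) with (n1*(u1*n1+u2*n2) - n2*(n1*u2-n2*u1)) by ring.
    fold det. rewrite un, Hdet. ring. }
  assert (U2 : u2*N = 2*s*n2).
  { unfold N. replace (u2*(n1^2+n2^2)) with (n2*(u1*n1+u2*n2) + n1*(n1*u2-n2*u1)) by ring.
    fold det. rewrite un, Hdet. ring. }
  assert (UU : (u1^2+u2^2)*N = 4*s^2).
  { apply Rmult_eq_reg_r with N; [|lra].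
    replace ((u1^2+u2^2)*N*N) with ((u1*N)^2 + (u2*N)^2) by ring.
    rewrite U1, U2. unfold N. ring. }
  assert (E : XA*XB+YA*YB + XB*XC+YB*YC + XC*XA+YC*YA + r^2
     = XA*u1 + YA*u2 + (u1^2+u2^2)/2).
  { unfold u1,u2. replace ((XB + XC) ^ 2 + (YB + YC) ^ 2) with
      ((XB^2+YB^2) + (XC^2+YC^2) + 2*(XB*XC+YB*YC)) by ring. rewrite hB, hC. field. }
  rewrite E.
  replace ((XA * u1 + YA * u2 + (u1 ^ 2 + u2 ^ 2) / 2) * N)
    with (XA*(u1*N) + YA*(u2*N) + ((u1^2+u2^2)*N)/2) by field.
  rewrite U1, U2, UU. unfold n1, n2. field.
Qed.

Lemma antipodal_false (a b r X Y : R) :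
  0 < a -> 0 < b -> 0 < r -> X^2+Y^2 = r^2 ->
  (r^2-a^2+b^2)*X*(-X) + (r^2+a^2-b^2)*Y*(-Y) = r^2*(a^2+b^2-r^2) -> False.
Proof.
  intros ha hb hr hc he.
  assert (E : (r^2-a^2+b^2)*X*X + (r^2+a^2-b^2)*Y*Y + r^2*(a^2+b^2-r^2)
     = 2*a^2*Y^2 + 2*b^2*X^2 + (a^2+b^2 - r^2) * (r^2 - (X^2+Y^2))) by ring.
  rewrite hc in E.
  assert (Hm : 0 < 2*a^2*Y^2 + 2*b^2*X^2).
  { destruct (Req_dec X 0) as [->|HX].
    - assert (0 < r^2) by (apply pow_lt; auto).
      assert (0 < Y^2) by (replace (Y^2) with (r^2) by (rewrite <- hc; ring); auto).
      assert (0 < a^2) by (apply pow_lt; auto). 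
      replace (2 * a ^ 2 * Y ^ 2 + 2 * b ^ 2 * 0 ^ 2) with (2*(a^2*Y^2)) by ring.
      assert (0 < a^2*Y^2) by (apply Rmult_lt_0_compat; auto). lra.
    - assert (0 < X^2) by (replace (X^2) with (Rsqr X) by (unfold Rsqr; ring); apply Rsqr_pos_lt; auto).
      assert (0 < b^2) by (apply pow_lt; auto). 
      assert (0 <= a^2*Y^2) by (apply Rmult_le_pos; apply pow2_ge_0).
      assert (0 < b^2*X^2) by (apply Rmult_lt_0_compat; auto). lra. }
  nra.
Qed.

Lemma sq_cases (x y : R) : x^2 = y^2 -> x = y \/ x = - y.
Proof. intros H. assert ((x-y)*(x+y) = 0) by nra.
  apply Rmult_integral in H0. destruct H0; [left|right]; lra. Qed.

Section Final.
Variables (a b r : R).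
Let p := r^2-a^2+b^2.
Let q := r^2+a^2-b^2.
Let s := r^2*(a^2+b^2-r^2).
Let P (X Y : R) := p*X^2+q*Y^2.
Let N (X Y : R) := (p*X)^2+(q*Y)^2.
Let Kc := (p-q)*(q^2*r^2) - (q*r^2+s)*(p^2-q^2).
Let Sf (XA YA XB YB XC YC : R) := XA*XB+YA*YB + XB*XC+YB*YC + XC*XA+YC*YA.

Lemma PN_lin X Y : X^2+Y^2 = r^2 ->
  P X Y = q*r^2 + (p-q)*X^2 /\ N X Y = q^2*r^2 + (p^2-q^2)*X^2.
Proof. intros h. assert (HY : Y^2 = r^2-X^2) by lra.
  unfold P, N. split.
  - replace (p*X^2+q*Y^2) with (p*X^2+q*(Y^2)) by ring. rewrite HY. ring.
  - replace ((p*X)^2+(q*Y)^2) with (p^2*X^2+q^2*(Y^2)) by ring. rewrite HY. ring.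
Qed.

Lemma K_id XV YV XW YW : XV^2+YV^2 = r^2 -> XW^2+YW^2 = r^2 ->
  (P XV YV + s) * N XW YW - (P XW YW + s) * N XV YV = Kc * (XV^2 - XW^2).
Proof. intros h1 h2. destruct (PN_lin _ _ h1) as [-> ->]. destruct (PN_lin _ _ h2) as [-> ->].
  unfold Kc. ring. Qed.

Lemma pair_flip X1 Y1 X2 Y2 : p*X1*X2 + q*Y1*Y2 = s -> p*X2*X1 + q*Y2*Y1 = s.
Proof. intros h. rewrite <- h. ring. Qed.

Lemma final_core (XA YA XB YB XC YC XA' YA' XB' YB' XC' YC' : R) :
  0 < a -> 0 < b -> 0 < r -> a^2 < r^2 -> b^2 < r^2 ->
  XA^2+YA^2 = r^2 -> XB^2+YB^2 = r^2 -> XC^2+YC^2 = r^2 ->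
  XA'^2+YA'^2 = r^2 -> XB'^2+YB'^2 = r^2 -> XC'^2+YC'^2 = r^2 ->
  p*XA*XB + q*YA*YB = s -> p*XB*XC + q*YB*YC = s -> p*XC*XA + q*YC*YA = s ->
  p*XA'*XB' + q*YA'*YB' = s -> p*XB'*XC' + q*YB'*YC' = s -> p*XC'*XA' + q*YC'*YA' = s ->
  0 < (XA-XB)^2+(YA-YB)^2 -> 0 < (XB-XC)^2+(YB-YC)^2 -> 0 < (XC-XA)^2+(YC-YA)^2 ->
  0 < (XA'-XB')^2+(YA'-YB')^2 -> 0 < (XB'-XC')^2+(YB'-YC')^2 -> 0 < (XC'-XA')^2+(YC'-YA')^2 ->
  Sf XA YA XB YB XC YC = Sf XA' YA' XB' YB' XC' YC'.
Proof.
  intros ha hb hr har hbr cA cB cC cA' cB' cC' eAB eBC eCA eAB' eBC' eCA' dAB dBC dCA dAB' dBC' dCA'.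
  assert (hp : 0 < p) by (unfold p; assert (0 < b^2) by (apply pow_lt; auto); lra).
  assert (hq : 0 < q) by (unfold q; assert (0 < a^2) by (apply pow_lt; auto); lra).
  assert (Npos : forall X Y, X^2+Y^2 = r^2 -> 0 < N X Y).
  { intros X Y h. unfold N.
    assert (0 < r^2) by (apply pow_lt; auto).
    destruct (Req_dec X 0) as [->|HX].
    - assert (0 < Y^2) by (replace (Y^2) with (r^2) by (rewrite <- h; ring); auto).
      replace ((p*0)^2+(q*Y)^2) with (q^2*Y^2) by ring.
      apply Rmult_lt_0_compat; auto. apply pow_lt; auto.
    - assert (0 < X^2) by (replace (X^2) with (Rsqr X) by (unfold Rsqr; ring); apply Rsqr_pos_lt; auto).
      assert (0 < (p*X)^2) by (rewrite Rpow_mult_distr; apply Rmult_lt_0_compat; auto; apply pow_lt; auto).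
      assert (0 <= (q*Y)^2) by apply pow2_ge_0. lra. }
  set (S1 := Sf XA YA XB YB XC YC). set (S2 := Sf XA' YA' XB' YB' XC' YC').
  assert (VA : (S1 + r^2) * N XA YA = 2*s*(P XA YA + s)).
  { pose proof (vertex_core p q s r XA YA XB YB XC YC cB cC eAB (pair_flip _ _ _ _ eCA) dBC (Npos _ _ cA)) as H.
    unfold S1, Sf, N, P. rewrite <- H. ring. }
  assert (VB : (S1 + r^2) * N XB YB = 2*s*(P XB YB + s)).
  { pose proof (vertex_core p q s r XB YB XC YC XA YA cC cA eBC (pair_flip _ _ _ _ eAB) dCA (Npos _ _ cB)) as H.
    unfold S1, Sf, N, P. rewrite <- H. ring. }
  assert (VC : (S1 + r^2) * N XC YC = 2*s*(P XC YC + s)).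
  { pose proof (vertex_core p q s r XC YC XA YA XB YB cA cB eCA (pair_flip _ _ _ _ eBC) dAB (Npos _ _ cC)) as H.
    unfold S1, Sf, N, P. rewrite <- H. ring. }
  assert (VA' : (S2 + r^2) * N XA' YA' = 2*s*(P XA' YA' + s)).
  { pose proof (vertex_core p q s r XA' YA' XB' YB' XC' YC' cB' cC' eAB' (pair_flip _ _ _ _ eCA') dBC' (Npos _ _ cA')) as H.
    unfold S2, Sf, N, P. rewrite <- H. ring. }
  assert (NA := Npos _ _ cA). assert (NB := Npos _ _ cB). assert (NC := Npos _ _ cC).
  assert (NA' := Npos _ _ cA').
  destruct (Req_dec s 0) as [Hs|Hs].
  { rewrite Hs in VA, VA'.
    assert (S1 + r^2 = 0).
    { apply Rmult_eq_reg_r with (N XA YA); lra. }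
    assert (S2 + r^2 = 0).
    { apply Rmult_eq_reg_r with (N XA' YA'); lra. }
    lra. }
  destruct (Req_dec Kc 0) as [HK|HK].
  { assert (KI := K_id _ _ _ _ cA cA'). rewrite HK in KI.
    apply Rmult_eq_reg_r with (N XA YA * N XA' YA'); [|apply Rgt_not_eq; apply Rmult_lt_0_compat; auto].
    replace (S1 * (N XA YA * N XA' YA')) with ((S1 + r^2) * N XA YA * N XA' YA' - r^2 * N XA YA * N XA' YA') by ring.
    replace (S2 * (N XA YA * N XA' YA')) with ((S2 + r^2) * N XA' YA' * N XA YA - r^2 * N XA YA * N XA' YA') by ring.
    rewrite VA, VA'.
    replace (2 * s * (P XA YA + s) * N XA' YA') with (2*s*((P XA YA + s) * N XA' YA')) by ring.
    replace (2 * s * (P XA' YA' + s) * N XA YA) with (2*s*((P XA' YA' + s) * N XA YA)) by ring.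
    rewrite Rmult_0_l in KI. apply Rminus_diag_uniq in KI. rewrite KI. reflexivity. }
  exfalso.
  assert (tAB : XA^2 = XB^2).
  { assert (KI := K_id _ _ _ _ cA cB).
    assert (E : (S1 + r^2) * N XA YA * N XB YB = (S1 + r^2) * N XB YB * N XA YA) by ring.
    rewrite VA, VB in E.
    assert (2*s*(Kc * (XA^2 - XB^2)) = 0) by (rewrite <- KI; lra).
    apply Rmult_integral in H. destruct H as [H|H]; [lra|].
    apply Rmult_integral in H. destruct H as [H|H]; [contradiction|lra]. }
  assert (tAC : XA^2 = XC^2).
  { assert (KI := K_id _ _ _ _ cA cC).
    assert (E : (S1 + r^2) * N XA YA * N XC YC = (S1 + r^2) * N XC YC * N XA YA) by ring.
    rewrite VA, VC in E.
    assert (2*s*(Kc * (XA^2 - XC^2)) = 0) by (rewrite <- KI; lra).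
    apply Rmult_integral in H. destruct H as [H|H]; [lra|].
    apply Rmult_integral in H. destruct H as [H|H]; [contradiction|lra]. }
  assert (uAB : YA^2 = YB^2) by lra.
  assert (uAC : YA^2 = YC^2) by lra.
  assert (tBA : XB^2 = XA^2) by lra. assert (tCA : XC^2 = XA^2) by lra.
  assert (uBA : YB^2 = YA^2) by lra. assert (uCA : YC^2 = YA^2) by lra.
  apply sq_cases in tBA. apply sq_cases in tCA. apply sq_cases in uBA. apply sq_cases in uCA.
  assert (AF : forall X Y, X^2+Y^2 = r^2 -> p*X*(-X) + q*Y*(-Y) = s -> False).
  { intros X Y h e. apply (antipodal_false a b r X Y); auto. }
  clear VA VB VC VA' S1 S2.
  destruct tBA as [->| ->], tCA as [->| ->], uBA as [->| ->], uCA as [->| ->].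
  all: try (exfalso; clear -dAB; assert (H: (XA - XA) ^ 2 + (YA - YA) ^ 2 = 0) by ring; lra).
  all: try (exfalso; clear -dBC; assert (H: (XA - XA) ^ 2 + (YA - YA) ^ 2 = 0) by ring; lra).
  all: try (exfalso; clear -dCA; assert (H: (XA - XA) ^ 2 + (YA - YA) ^ 2 = 0) by ring; lra).
  all: try (exfalso; clear -dAB; assert (H: (XA - XA) ^ 2 + (-YA - -YA) ^ 2 = 0) by ring; lra).
  all: try (exfalso; clear -dAB; assert (H: (-XA - -XA) ^ 2 + (YA - YA) ^ 2 = 0) by ring; lra).
  all: try (exfalso; clear -dAB; assert (H: (-XA - -XA) ^ 2 + (-YA - -YA) ^ 2 = 0) by ring; lra).
  all: try (exfalso; clear -dBC; assert (H: (XA - XA) ^ 2 + (-YA - -YA) ^ 2 = 0) by ring; lra).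
  all: try (exfalso; clear -dBC; assert (H: (-XA - -XA) ^ 2 + (YA - YA) ^ 2 = 0) by ring; lra).
  all: try (exfalso; clear -dBC; assert (H: (-XA - -XA) ^ 2 + (-YA - -YA) ^ 2 = 0) by ring; lra).
  all: try (apply (AF XA YA cA); rewrite <- eAB; ring).
  all: try (apply (AF XA YA cA); rewrite <- eBC; ring).
  all: try (apply (AF XA YA cA); rewrite <- eCA; ring).
Qed.
End Final.

Definition rX (o : point) (u1 u2 : R) (P : point) : R :=
  (fst P - fst o) * u1 + (snd P - snd o) * u2.
Definition rY (o : point) (u1 u2 : R) (P : point) : R :=
  - (fst P - fst o) * u2 + (snd P - snd o) * u1.

Lemma dist2_nonneg p q : 0 <= dist2 p q.
Proof. unfold dist2. assert (H1 := pow2_ge_0 (fst p - fst q)). assert (H2 := pow2_ge_0 (snd p - snd q)). lra. Qed.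

Lemma circ_rot o r u1 u2 A : u1^2+u2^2 = 1 -> 0 < r -> on_circle o r A ->
  (rX o u1 u2 A)^2 + (rY o u1 u2 A)^2 = r^2.
Proof.
  intros hn hr h. unfold on_circle, dist in h.
  assert (E : dist2 o A = r^2).
  { rewrite <- h. symmetry. apply pow2_sqrt. apply dist2_nonneg. }
  unfold dist2 in E. unfold rX, rY.
  replace (((fst A - fst o) * u1 + (snd A - snd o) * u2) ^ 2 +
    (- (fst A - fst o) * u2 + (snd A - snd o) * u1) ^ 2) with
    ((u1^2+u2^2) * ((fst o - fst A) ^ 2 + (snd o - snd A) ^ 2)) by ring.
  rewrite hn, E. ring.
Qed.

Lemma distinct_rot o u1 u2 A B : u1^2+u2^2 = 1 -> A <> B ->
  0 < (rX o u1 u2 A - rX o u1 u2 B)^2 + (rY o u1 u2 A - rY o u1 u2 B)^2.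
Proof.
  intros hn hAB.
  set (d1 := rX o u1 u2 A - rX o u1 u2 B). set (d2 := rY o u1 u2 A - rY o u1 u2 B).
  assert (H1 := pow2_ge_0 d1). assert (H2 := pow2_ge_0 d2).
  destruct (Req_dec (d1^2+d2^2) 0) as [H|H]; [|lra].
  exfalso. apply hAB.
  assert (z1 : d1 = 0) by nra. assert (z2 : d2 = 0) by nra.
  assert (e1 : fst A - fst B = u1*d1 - u2*d2).
  { unfold d1, d2, rX, rY. replace (fst A - fst B) with ((fst A - fst B)*(u1^2+u2^2)) by (rewrite hn; ring). ring. }
  assert (e2 : snd A - snd B = u2*d1 + u1*d2).
  { unfold d1, d2, rX, rY. replace (snd A - snd B) with ((snd A - snd B)*(u1^2+u2^2)) by (rewrite hn; ring). ring. }
  rewrite z1, z2 in e1, e2.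
  destruct A as [a1 a2], B as [b1 b2]. simpl in *. f_equal; lra.
Qed.

Lemma ellipse_rot E o P : e_center E = o -> (on_ellipse E P <->
  (rX o (e_u1 E) (e_u2 E) P)^2 / e_a E ^2 + (rY o (e_u1 E) (e_u2 E) P)^2 / e_b E ^2 = 1).
Proof. intros hc. unfold on_ellipse. rewrite hc. cbv zeta. unfold rX, rY. tauto. Qed.

Lemma cross_rot o u1 u2 A B Q :
  (rX o u1 u2 B - rX o u1 u2 A) * (rY o u1 u2 Q - rY o u1 u2 A)
  - (rY o u1 u2 B - rY o u1 u2 A) * (rX o u1 u2 Q - rX o u1 u2 A)
  = (u1^2+u2^2) * ((fst B - fst A) * (snd Q - snd A) - (snd B - snd A) * (fst Q - fst A)).
Proof. unfold rX, rY. ring. Qed.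

Lemma side_rel (o : point) (r : R) (E : ellipse) A B :
  0 < r -> wf_ellipse E -> e_center E = o -> A <> B ->
  on_circle o r A -> on_circle o r B -> side_tangent E A B ->
  let u1 := e_u1 E in let u2 := e_u2 E in let a := e_a E in let b := e_b E in
  (r^2-a^2+b^2) * rX o u1 u2 A * rX o u1 u2 B + (r^2+a^2-b^2) * rY o u1 u2 A * rY o u1 u2 B
   = r^2*(a^2+b^2-r^2).
Proof.
  intros hr [ha [hb hn]] hc hAB cA cB [pt [Hell [Hseg Huniq]]] u1 u2 a b.
  fold u1 u2 in hn. fold a in ha. fold b in hb.
  assert (cA' := circ_rot o r u1 u2 A hn hr cA).
  assert (cB' := circ_rot o r u1 u2 B hn hr cB).
  assert (dAB := distinct_rot o u1 u2 B A hn (not_eq_sym hAB)).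
  set (X1 := rX o u1 u2 A) in *. set (Y1 := rY o u1 u2 A) in *.
  set (X2 := rX o u1 u2 B) in *. set (Y2 := rY o u1 u2 B) in *.
  apply (bilinear_core a b r X1 Y1 X2 Y2); auto.
  set (T1 := rX o u1 u2 pt). set (T2 := rY o u1 u2 pt).
  apply (tangency_core a b X1 Y1 X2 Y2 T1 T2); auto.
  - apply (ellipse_rot E o pt hc). exact Hell.
  - destruct Hseg as [t [_ Hpt]].
    assert (e1 : T1 - X1 = t * (X2 - X1)) by (unfold T1, X1, X2, rX; rewrite Hpt; simpl; ring).
    assert (e2 : T2 - Y1 = t * (Y2 - Y1)) by (unfold T2, Y1, Y2, rY; rewrite Hpt; simpl; ring).
    rewrite e1, e2. ring.
  - intros l Hl.
    set (Z1 := T1 + l * (X2 - X1)) in *. set (Z2 := T2 + l * (Y2 - Y1)) in *.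
    set (Q := (fst o + Z1*u1 - Z2*u2, snd o + Z1*u2 + Z2*u1)).
    assert (qX : rX o u1 u2 Q = Z1).
    { unfold rX, Q; simpl. transitivity (Z1*(u1^2+u2^2)); [ring | rewrite hn; ring]. }
    assert (qY : rY o u1 u2 Q = Z2).
    { unfold rY, Q; simpl. transitivity (Z2*(u1^2+u2^2)); [ring | rewrite hn; ring]. }
    assert (HQ : Q = pt).
    { apply Huniq.
      - apply (ellipse_rot E o Q hc). fold u1 u2 a b. rewrite qX, qY. exact Hl.
      - unfold on_line.
        assert (C := cross_rot o u1 u2 A B Q). rewrite hn, Rmult_1_l in C. rewrite <- C.
        fold X1 X2 Y1 Y2. rewrite qX, qY. unfold Z1, Z2.
        destruct Hseg as [t [_ Hpt]].
        assert (e1 : T1 - X1 = t * (X2 - X1)) by (unfold T1, X1, X2, rX; rewrite Hpt; simpl; ring).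
        assert (e2 : T2 - Y1 = t * (Y2 - Y1)) by (unfold T2, Y1, Y2, rY; rewrite Hpt; simpl; ring).
        replace (T1 + l * (X2 - X1) - X1) with ((t + l) * (X2 - X1)) by lra.
        replace (T2 + l * (Y2 - Y1) - Y1) with ((t + l) * (Y2 - Y1)) by lra.
        ring. }
    assert (z1 : Z1 = T1) by (rewrite <- qX, HQ; reflexivity).
    assert (z2 : Z2 = T2) by (rewrite <- qY, HQ; reflexivity).
    unfold Z1 in z1; unfold Z2 in z2.
    assert (w1 : l * (X2 - X1) = 0) by lra.
    assert (w2 : l * (Y2 - Y1) = 0) by lra.
    destruct (Req_dec l 0) as [|Hl0]; auto.
    apply Rmult_integral in w1; apply Rmult_integral in w2.
    destruct w1 as [w1|w1]; [contradiction|]. destruct w2 as [w2|w2]; [contradiction|].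
    exfalso. rewrite w1, w2 in dAB. lra.
Qed.

Lemma axis_bound (o : point) (r : R) (E : ellipse) :
  0 < r -> wf_ellipse E -> e_center E = o -> ellipse_inside o r E ->
  e_a E ^ 2 < r ^ 2 /\ e_b E ^ 2 < r ^ 2.
Proof.
  intros hr [ha [hb hn]] hc hin.
  set (u1 := e_u1 E) in *. set (u2 := e_u2 E) in *. set (a := e_a E) in *. set (b := e_b E) in *.
  split.
  - set (Q := (fst o + a*u1, snd o + a*u2)).
    assert (HQ : on_ellipse E Q).
    { apply (ellipse_rot E o Q hc). fold u1 u2 a b. unfold rX, rY, Q; simpl.
      replace ((fst o + a * u1 - fst o) * u1 + (snd o + a * u2 - snd o) * u2) with (a*(u1^2+u2^2)) by ring.
      replace (- (fst o + a * u1 - fst o) * u2 + (snd o + a * u2 - snd o) * u1) with 0 by ring.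
      rewrite hn. field. lra. }
    assert (D := hin Q HQ). unfold Defs.dist, dist2, Q in D; cbn [fst snd] in D.
    replace ((fst o - (fst o + a * u1)) ^ 2 + (snd o - (snd o + a * u2)) ^ 2) with (a^2*(u1^2+u2^2)) in D by ring.
    rewrite hn, Rmult_1_r, sqrt_pow2 in D by lra. nra.
  - set (Q := (fst o - b*u2, snd o + b*u1)).
    assert (HQ : on_ellipse E Q).
    { apply (ellipse_rot E o Q hc). fold u1 u2 a b. unfold rX, rY, Q; simpl.
      replace ((fst o - b * u2 - fst o) * u1 + (snd o + b * u1 - snd o) * u2) with 0 by ring.
      replace (- (fst o - b * u2 - fst o) * u2 + (snd o + b * u1 - snd o) * u1) with (b*(u1^2+u2^2)) by ring.
      rewrite hn. field. lra. }
    assert (D := hin Q HQ). unfold Defs.dist, dist2, Q in D; cbn [fst snd] in D.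
    replace ((fst o - (fst o - b * u2)) ^ 2 + (snd o - (snd o + b * u1)) ^ 2) with (b^2*(u1^2+u2^2)) in D by ring.
    rewrite hn, Rmult_1_r, sqrt_pow2 in D by lra. nra.
Qed.

Lemma area_formula o r u1 u2 A B C : u1^2+u2^2 = 1 ->
  (rX o u1 u2 A)^2 + (rY o u1 u2 A)^2 = r^2 ->
  (rX o u1 u2 B)^2 + (rY o u1 u2 B)^2 = r^2 ->
  (rX o u1 u2 C)^2 + (rY o u1 u2 C)^2 = r^2 ->
  median_circles_area A B C = PI * (18*r^2 - 6*(
    rX o u1 u2 A * rX o u1 u2 B + rY o u1 u2 A * rY o u1 u2 B +
    rX o u1 u2 B * rX o u1 u2 C + rY o u1 u2 B * rY o u1 u2 C +
    rX o u1 u2 C * rX o u1 u2 A + rY o u1 u2 C * rY o u1 u2 A)) / 4.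
Proof.
  intros hn cA cB cC.
  unfold median_circles_area, circle_area, Defs.dist.
  rewrite !pow2_sqrt by apply dist2_nonneg.
  replace (18 * r ^ 2) with (6*(((rX o u1 u2 A)^2 + (rY o u1 u2 A)^2) + ((rX o u1 u2 B)^2 + (rY o u1 u2 B)^2)
     + ((rX o u1 u2 C)^2 + (rY o u1 u2 C)^2))) by lra.
  transitivity (PI * ((u1^2+u2^2) * (dist2 (midpoint B C) A + dist2 (midpoint C A) B + dist2 (midpoint A B) C))).
  - rewrite hn. ring.
  - unfold dist2, midpoint, rX, rY; simpl. field.
Qed.

Theorem theorem2p1 (o : point) (r : R) (E : ellipse) :
  0 < r -> wf_ellipse E -> ellipse_inside o r E -> poncelet3 o r E ->
  e_center E = o ->
  forall A B C A' B' C' : point,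
    poncelet_triangle o r E A B C -> poncelet_triangle o r E A' B' C' ->
    median_circles_area A B C = median_circles_area A' B' C'.
Proof.
  intros hr hE hin _ hc A B C A' B' C'
    [nAB [nBC [nCA [cA [cB [cC [tAB [tBC tCA]]]]]]]]
    [nAB' [nBC' [nCA' [cA' [cB' [cC' [tAB' [tBC' tCA']]]]]]]].
  destruct (axis_bound o r E hr hE hc hin) as [har hbr].
  pose proof hE as [ha [hb hn]].
  assert (eAB := side_rel o r E A B hr hE hc nAB cA cB tAB).
  assert (eBC := side_rel o r E B C hr hE hc nBC cB cC tBC).
  assert (eCA := side_rel o r E C A hr hE hc nCA cC cA tCA).
  assert (eAB' := side_rel o r E A' B' hr hE hc nAB' cA' cB' tAB').
  assert (eBC' := side_rel o r E B' C' hr hE hc nBC' cB' cC' tBC').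
  assert (eCA' := side_rel o r E C' A' hr hE hc nCA' cC' cA' tCA').
  cbv zeta in eAB, eBC, eCA, eAB', eBC', eCA'.
  set (u1 := e_u1 E) in *. set (u2 := e_u2 E) in *.
  assert (qA := circ_rot o r u1 u2 A hn hr cA).
  assert (qB := circ_rot o r u1 u2 B hn hr cB).
  assert (qC := circ_rot o r u1 u2 C hn hr cC).
  assert (qA' := circ_rot o r u1 u2 A' hn hr cA').
  assert (qB' := circ_rot o r u1 u2 B' hn hr cB').
  assert (qC' := circ_rot o r u1 u2 C' hn hr cC').
  rewrite (area_formula o r u1 u2 A B C hn qA qB qC).
  rewrite (area_formula o r u1 u2 A' B' C' hn qA' qB' qC').
  apply (f_equal (fun S => PI * (18 * r^2 - 6*S)/4)).
  apply (final_core (e_a E) (e_b E) r); auto;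
    apply distinct_rot; auto.
Qed.
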